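(* Let $A\in\mathbb{R}^{m\times n}$ with $r:=\mathrm{rank}(A)$. Let $T$ be an ordered subset of $r$ elements of $\{1,\dots,n\}$ and let $\hat A:=A[:,T]$ be the $m\times r$ submatrix of $A$ formed by the columns $T$. If $\mathrm{rank}(\hat A)=r$, let $\hat H:=\hat A^+=(\hat A^\top\hat A)^{-1}\hat A^\top$, and let $H\in\mathbb{R}^{n\times m}$ be the matrix whose rows indexed by $T$ are given by $\hat H$ (in the order of $T$) and all other rows are zero. Then $H$ satisfies $AHA=A$, $HAH=H$ and $(AH)^\top=AH$; i.e., $H$ is an ah-symmetric reflexive generalized inverse of $A$.
   Context: $A[:,T]$ denotes the submatrix of $A$ formed by the columns with indices in $T$. A matrix $H$ is a generalized inverse of $A$ if $AHA=A$, reflexive if additionally $HAH=H$, and ah-symmetric if $AH$ is symmetric. *)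

(* Defs.v *)
From mathcomp Require Import all_boot all_order all_algebra.
Set Implicit Arguments. Unset Strict Implicit. Unset Printing Implicit Defensive.
Import Order.TTheory GRing.Theory Num.Theory.
Local Open Scope ring_scope.

Definition fcr_pinv (R : realFieldType) (m r : nat) (B : 'M[R]_(m, r)) : 'M[R]_(r, m) :=
  invmx (B^T *m B) *m B^T.

(* The n x m matrix whose row t k is row k of Hh, other rows zero.
   t : 'I_r -> 'I_n is the ordered index set T (injective). *)
Definition embed_rows (R : realFieldType) (n r m : nat) (t : 'I_r -> 'I_n)
  (Hh : 'M[R]_(r, m)) : 'M[R]_(n, m) :=
  \matrix_(i < n, j < m)
    match [pick k : 'I_r | t k == i] with
    | Some k => Hh k j
    | None => 0
    end.

(* Main.v *)
Require Import Defs.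
From mathcomp Require Import all_boot all_order all_algebra.
Import Order.TTheory GRing.Theory Num.Theory.
Local Open Scope ring_scope.

Lemma gram_unit (R : realFieldType) (m r : nat) (B : 'M[R]_(m, r)) :
  \rank B = r -> B^T *m B \in unitmx.
Proof.
move=> rB; rewrite -row_free_unit; apply: inj_row_free => v Hv.
have fB : row_free B^T by rewrite -row_leq_rank mxrank_tr rB.
set w := v *m B^T.
have ww : w *m w^T = 0 by rewrite /w trmx_mul trmxK mulmxA -(mulmxA v) Hv mul0mx.
have w0 : w = 0.
  apply/matrixP => i j; rewrite [i]ord1 [RHS]mxE.
  have := congr1 (fun M : 'M[R]_1 => M 0 0) ww; rewrite [LHS]mxE [RHS]mxE => /eqP.
  rewrite psumr_eq0; last by move=> k _; rewrite [w^T k 0]mxE -expr2 sqr_ge0.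
  by move/allP/(_ j (mem_index_enum _)); rewrite [w^T j 0]mxE mulf_eq0 orbb => /eqP.
by apply/eqP; rewrite -(mulmx_free_eq0 _ fB) -/w w0.
Qed.

Lemma embedE (R : realFieldType) (n r m : nat) (t : 'I_r -> 'I_n)
  (Hh : 'M[R]_(r, m)) : injective t ->
  embed_rows t Hh = (\matrix_(i < n, k < r) ((t k == i)%:R : R)) *m Hh.
Proof.
move=> tinj; apply/matrixP => i j; rewrite !mxE.
case: pickP => [k0 /eqP tk0 | none].
  rewrite (bigD1 k0) //= mxE tk0 eqxx mul1r big1 ?addr0 // => k nk.
  rewrite mxE; case: eqP => [tki|]; last by rewrite mul0r.
  by case/eqP: nk; apply: tinj; rewrite tki tk0.
by rewrite big1 // => k _; rewrite mxE none mul0r.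
Qed.

Lemma colsubE (R : realFieldType) (m n r : nat) (A : 'M[R]_(m, n))
  (t : 'I_r -> 'I_n) :
  colsub t A = A *m (\matrix_(i < n, k < r) ((t k == i)%:R : R)).
Proof.
apply/matrixP => i k; rewrite !mxE (bigD1 (t k)) //= mxE eqxx mulr1.
by rewrite big1 ?addr0 // => l /negPf nl; rewrite mxE eq_sym nl mulr0.
Qed.

Theorem theorem3p3 (R : realFieldType) (m n r : nat) (A : 'M[R]_(m, n))
  (t : 'I_r -> 'I_n) :
  \rank A = r ->
  injective t ->
  \rank (colsub t A) = r ->
  let H := embed_rows t (fcr_pinv (colsub t A)) in
  [/\ A *m H *m A = A, H *m A *m H = H & (A *m H)^T = A *m H].
Proof.
move=> rA tinj rB H.
set S := \matrix_(i < n, k < r) ((t k == i)%:R : R).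
set B := colsub t A.
have AS : A *m S = B by rewrite /B colsubE.
have Gu := @gram_unit R m r B rB.
set Hh := fcr_pinv B.
have HhB : Hh *m B = 1%:M by rewrite /Hh /fcr_pinv -mulmxA mulVmx.
have HE : H = S *m Hh by rewrite /H embedE.
have AH : A *m H = B *m Hh by rewrite HE mulmxA AS.
have sBA : (B^T <= A^T)%MS by rewrite -AS trmx_mul submxMl.
have sAB : (A^T <= B^T)%MS.
  by rewrite -(mxrank_leqif_sup sBA).2 !mxrank_tr rA rB.
case/submxP: sAB => D AD.
have AB : A = B *m D^T by rewrite -[A]trmxK AD trmx_mul trmxK.
have BT : (B *m Hh)^T = B *m Hh.
  rewrite /Hh /fcr_pinv !trmx_mul trmxK trmx_inv trmx_mul trmxK.
  by rewrite !mulmxA.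
clearbody H Hh.
split.
- by rewrite AH {1}AB mulmxA -(mulmxA B) HhB mulmx1 -AB.
- by rewrite HE -!mulmxA (mulmxA A) AS (mulmxA Hh) HhB mul1mx.
- by rewrite AH.
Qed.
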